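(* Let $\Sigma=\{0,1,2,3\}$ and $L=\{0^k1^l2^m3^n\mid k,l,m,n\in\mathbb N_0,\ (l\ge2\text{ and }m\ge3)\text{ or }(l\ge3\text{ and }m\ge2)\}$. Then no DACA with time complexity $3$ (i.e., accepting every word of $L$ at some step $t<3$... more precisely, every $x\in L$ of length $n$ at some step $t< T(n)$ with $T\equiv3$) accepts $L$, whereas there is a one-sided $7/8$-error PACA with time complexity $3$ that accepts $L$.
   Context: A (bounded, one-dimensional) CA has state set $Q$, boundary symbol $\$\notin Q$, local transition function $\delta\colon Q_\$\times Q\times Q_\$\to Q$; on $s\in Q^n$, $\Delta(s)=\delta(\$,s_0,s_1)\cdots\delta(s_{n-2},s_{n-1},\$)$. A DACA has input alphabet $\Sigma\subseteq Q$ and accepting states $A\subseteq Q$; it accepts $x\in\Sigma^n$ iff $\Delta^t(x)\in A^n$ for some $t$; it has time complexity $T$ if every accepted $x$ of length $n$ satisfies $\Delta^t(x)\in A^n$ for some $t<T(n)$. A PACA is like a DACA but with two local transition functions $\delta_0,\delta_1$: at each step each cell independently tosses a fair coin $c$ and updates by $\delta_c$; a computation is accepting if at some step all cells are in $A$; time complexity $T$ means every accepting computation on an input of length $n$ first reaches $A^n$ at a step $<T(n)$. For $p\in[0,1)$, a one-sided $p$-error PACA for $L$ accepts every $x\in L$ with probability $\ge1-p$ and every $x\notin L$ with probability $0$. *)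

(* Defs.v *)
From mathcomp Require Import all_boot all_order all_algebra.
Set Implicit Arguments. Unset Strict Implicit. Unset Printing Implicit Defensive.
Import Order.TTheory GRing.Theory Num.Theory.

Definition sym (k : nat) : 'I_4 := inord k.

Definition inL (x : seq 'I_4) : Prop :=
  exists k l m n : nat,
    x = nseq k (sym 0) ++ nseq l (sym 1) ++ nseq m (sym 2) ++ nseq n (sym 3)
    /\ ((2 <= l /\ 3 <= m) \/ (3 <= l /\ 2 <= m)).

Section CA.
Variable Q : finType.
(* The boundary symbol $ is represented by None : option Q. *)

Definition stepi (f : nat -> option Q -> Q -> option Q -> Q) (s : seq Q) : seq Q :=
  [seq f p.1 p.2.1.1 p.2.1.2 p.2.2
  | p <- zip (iota 0 (size s))
             (zip (zip (None :: map Some s) s) (rcons (behead (map Some s)) None))].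

Definition Delta (delta : option Q -> Q -> option Q -> Q) : seq Q -> seq Q :=
  stepi (fun _ => delta).

Definition allA (A : {set Q}) (s : seq Q) : bool := all (fun q => q \in A) s.

Definition daca_accepts (inp : 'I_4 -> Q) (delta : option Q -> Q -> option Q -> Q)
  (A : {set Q}) (x : seq 'I_4) : Prop :=
  exists t, allA A (iter t (Delta delta) (map inp x)).

Definition daca_time (inp : 'I_4 -> Q) (delta : option Q -> Q -> option Q -> Q)
  (A : {set Q}) (T : nat -> nat) : Prop :=
  forall x : seq 'I_4, daca_accepts inp delta A x ->
    exists t, t < T (size x) /\ allA A (iter t (Delta delta) (map inp x)).

Definition daca_recognizes (inp : 'I_4 -> Q) (delta : option Q -> Q -> option Q -> Q)
  (A : {set Q}) (Lang : seq 'I_4 -> Prop) : Prop :=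
  forall x : seq 'I_4, x != [::] -> (daca_accepts inp delta A x <-> Lang x).

(* coins j i = coin tossed by cell i in the update leading from step j to j+1. *)
Fixpoint paca_run (d0 d1 : option Q -> Q -> option Q -> Q) (coins : nat -> nat -> bool)
  (s : seq Q) (t : nat) : seq Q :=
  match t with
  | 0 => s
  | t'.+1 => stepi (fun i => if coins t' i then d1 else d0) (paca_run d0 d1 coins s t')
  end.

Definition paca_time (inp : 'I_4 -> Q) (d0 d1 : option Q -> Q -> option Q -> Q)
  (A : {set Q}) (T : nat -> nat) : Prop :=
  forall (x : seq 'I_4) (coins : nat -> nat -> bool) (t : nat),
    allA A (paca_run d0 d1 coins (map inp x) t) ->
    exists t', t' < T (size x) /\ allA A (paca_run d0 d1 coins (map inp x) t').

(* Coin sequence determined by a finite table c (other coins irrelevant). *)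
Definition coins_of (T n : nat) (c : {ffun 'I_T * 'I_n -> bool}) : nat -> nat -> bool :=
  fun j i => oapp (fun j' : 'I_T => oapp (fun i' : 'I_n => c (j', i')) false (insub i))
                  false (insub j).

Definition prob_within (inp : 'I_4 -> Q) (d0 d1 : option Q -> Q -> option Q -> Q)
  (A : {set Q}) (x : seq 'I_4) (T : nat) : rat :=
  (#|[set c : {ffun 'I_T * 'I_(size x) -> bool} |
      [exists t : 'I_T, allA A (paca_run d0 d1 (coins_of c) (map inp x) t)]]|%:R
   / (2 ^ (T * size x))%:R)%R.

(* Pr[accept] = sup_T prob_within T (continuity from below); these express
   Pr[accept] >= r and Pr[accept] = 0. *)
Definition acc_prob_ge (inp : 'I_4 -> Q) (d0 d1 : option Q -> Q -> option Q -> Q)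
  (A : {set Q}) (x : seq 'I_4) (r : rat) : Prop :=
  forall e : rat, (0 < e)%R -> exists T, (r - e <= prob_within inp d0 d1 A x T)%R.

Definition acc_prob_zero (inp : 'I_4 -> Q) (d0 d1 : option Q -> Q -> option Q -> Q)
  (A : {set Q}) (x : seq 'I_4) : Prop :=
  forall T, prob_within inp d0 d1 A x T = 0%R.

Definition paca_one_sided (inp : 'I_4 -> Q) (d0 d1 : option Q -> Q -> option Q -> Q)
  (A : {set Q}) (p : rat) (Lang : seq 'I_4 -> Prop) : Prop :=
  forall x : seq 'I_4, x != [::] ->
    (Lang x -> acc_prob_ge inp d0 d1 A x (1 - p)%R) /\
    (~ Lang x -> acc_prob_zero inp d0 d1 A x).

End CA.

(* Main.v *)
Require Import Defs.
From mathcomp Require Import all_boot all_order all_algebra.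
From mathcomp Require Import zify lra.

Ltac splitall := repeat match goal with H : is_true (_ && _) |- _ => case/andP: H => ? ? end.

Section P1.
Variables (Q : finType) (dl : option Q -> Q -> option Q -> Q) (A : {set Q}) (a b c d : Q).
Let x1 := [:: a;a;a;b;b;c;c;c;d;d;d].
Let x2 := [:: a;a;a;b;b;b;c;c;d;d;d].
Let y := [:: a;a;a;b;b;c;c;d;d;d].
Lemma k2 : allA A (iter 2 (Delta dl) x1) -> allA A (iter 2 (Delta dl) x2) ->
  allA A (iter 2 (Delta dl) y).
Proof. rewrite /allA /Delta /stepi /= => H1 H2. splitall. by repeat (apply/andP; split). Qed.
Lemma k01 t s : t < 2 -> s = x1 \/ s = x2 -> allA A (iter t (Delta dl) s) -> allA A (iter t (Delta dl) y).
Proof.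
case: t => [|[|//]] _ [->|->]; rewrite /allA /Delta /stepi /= => H1; splitall;
  by repeat (apply/andP; split).
Qed.
End P1.

Lemma symv k : k < 4 -> nat_of_ord (sym k) = k.
Proof. by move=> h; rewrite /sym inordK. Qed.

Lemma notL : ~ inL (nseq 3 (sym 0) ++ nseq 2 (sym 1) ++ nseq 2 (sym 2) ++ nseq 3 (sym 3)).
Proof.
case=> [k [l [m [n [E H]]]]].
have C1 := congr1 (count_mem (sym 1)) E.
have C2 := congr1 (count_mem (sym 2)) E.
move: C1 C2; rewrite !count_cat !count_nseq /=.
have e01 : (sym 0 == sym 1) = false by apply/negbTE/eqP => /(congr1 (@nat_of_ord 4)); rewrite /sym !inordK.
have e21 : (sym 2 == sym 1) = false by apply/negbTE/eqP => /(congr1 (@nat_of_ord 4)); rewrite /sym !inordK.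
have e31 : (sym 3 == sym 1) = false by apply/negbTE/eqP => /(congr1 (@nat_of_ord 4)); rewrite /sym !inordK.
have e02 : (sym 0 == sym 2) = false by apply/negbTE/eqP => /(congr1 (@nat_of_ord 4)); rewrite /sym !inordK.
have e12 : (sym 1 == sym 2) = false by apply/negbTE/eqP => /(congr1 (@nat_of_ord 4)); rewrite /sym !inordK.
have e32 : (sym 3 == sym 2) = false by apply/negbTE/eqP => /(congr1 (@nat_of_ord 4)); rewrite /sym !inordK.
rewrite e01 e21 e31 e02 e12 e32 !eqxx /=. lia.
Qed.

Lemma part1 : ~ exists (Q : finType) (inp : 'I_4 -> Q) (delta : option Q -> Q -> option Q -> Q)
       (A : {set Q}),
       injective inp /\ daca_recognizes inp delta A inL /\
       daca_time inp delta A (fun _ => 3).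
Proof.
case=> Q [inp [dl [A [_ [R Tm]]]]].
set X1 := nseq 3 (sym 0) ++ nseq 2 (sym 1) ++ nseq 3 (sym 2) ++ nseq 3 (sym 3).
set X2 := nseq 3 (sym 0) ++ nseq 3 (sym 1) ++ nseq 2 (sym 2) ++ nseq 3 (sym 3).
set Y := nseq 3 (sym 0) ++ nseq 2 (sym 1) ++ nseq 2 (sym 2) ++ nseq 3 (sym 3).
have h1 : inL X1 by exists 3, 2, 3, 3; split => //; left.
have h2 : inL X2 by exists 3, 3, 2, 3; split => //; right.
have [t1 [lt1 a1]] := Tm X1 (proj2 (R X1 isT) h1).
have [t2 [lt2 a2]] := Tm X2 (proj2 (R X2 isT) h2).
apply: notL; apply: (proj1 (R Y isT)).
case: (ltnP t1 2) => c1.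
  exists t1; exact: (@k01 Q dl A (inp (sym 0)) (inp (sym 1)) (inp (sym 2)) (inp (sym 3)) t1 (map inp X1) c1 (or_introl erefl) a1).
case: (ltnP t2 2) => c2.
  exists t2; exact: (@k01 Q dl A (inp (sym 0)) (inp (sym 1)) (inp (sym 2)) (inp (sym 3)) t2 (map inp X2) c2 (or_intror erefl) a2).
have e1 : t1 = 2 by move: lt1 c1 => /=; lia.
have e2 : t2 = 2 by move: lt2 c2 => /=; lia.
subst t1 t2; exists 2; exact: (@k2 Q dl A (inp (sym 0)) (inp (sym 1)) (inp (sym 2)) (inp (sym 3)) a1 a2).
Qed.

Section Gen.
Variable Q : finType.
Lemma size_stepi f (s : seq Q) : size (stepi f s) = size s.
Proof.
rewrite /stepi size_map !size_zip size_iota /= size_map size_rcons size_behead size_map.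
lia.
Qed.

Lemma nth_stepi f (s : seq Q) d i : i < size s ->
  nth d (stepi f s) i = f i (nth None (None :: map Some s) i) (nth d s i) (nth None (map Some s) i.+1).
Proof.
move=> hi.
have hz : i < size (zip (iota 0 (size s))
             (zip (zip (None :: map Some s) s) (rcons (behead (map Some s)) None))).
  rewrite !size_zip size_iota /= size_map size_rcons size_behead size_map; lia.
rewrite /stepi (nth_map (0, ((None, d), None))) //.
rewrite nth_zip_cond hz /= nth_iota // add0n.
rewrite nth_zip_cond ifT; last first.
  rewrite !size_zip /= size_map size_rcons size_behead size_map; lia.
rewrite /= nth_zip_cond ifT; last by rewrite size_zip /= size_map; lia.
by rewrite /= nth_rcons_default nth_behead.
Qed.
End Gen.

Definition Q2 := ('I_4 * option 'I_4 * option 'I_4 * option 'I_4 * bool)%type.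
Definition ph (q : Q2) : nat := q.1.1.1.1.
Definition fl (q : Q2) := q.1.1.1.2.
Definition fc (q : Q2) := q.1.1.2.
Definition fr (q : Q2) := q.1.2.
Definition fb (q : Q2) := q.2.
Definition code (o : option 'I_4) : nat := if o is Some a then nat_of_ord a else 4.
Definition mk (p : nat) l c r b : Q2 := (inord p, l, c, r, b).
Definition oc (o : option Q2) := if o is Some q then fc q else None.

Definition chkv (w2 w1 w0 v1 v2 : nat) (bC bL : bool) : bool :=
  [&& (w1 == 4) ==> (w0 <= 1), (v1 == 4) ==> (2 <= w0),
     (v1 != 4) ==> ((v1 == w0) || (v1 == w0.+1)),
     [&& w0 == 1, v1 == 2 & bC] ==> [&& w2 == 1, w1 == 1 & v2 == 2] &
     [&& w1 == 1, w0 == 2 & ~~ bL] ==> [&& w2 == 1, v1 == 2 & v2 == 2]].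

Definition chk (L : option Q2) (C : Q2) (R : option Q2) : bool :=
  chkv (code (if L is Some q then fl q else None)) (code (fl C)) (code (fc C))
       (code (fr C)) (code (if R is Some q then fr q else None))
       (fb C) (if L is Some q then fb q else false).

Definition dl (b : bool) (L : option Q2) (C : Q2) (R : option Q2) : Q2 :=
  match ph C with
  | 0 => mk 1 (oc L) (fc C) (oc R) b
  | 1 => mk 2 None None None (chk L C R)
  | _ => mk 3 None None None false
  end.

Definition inp2 (a : 'I_4) : Q2 := mk 0 None (Some a) None false.
Definition A2 : {set Q2} := [set q : Q2 | (ph q == 2) && fb q].

Lemma ph_mk p l c r b : p < 4 -> ph (mk p l c r b) = p.
Proof. by move=> h; rewrite /ph /mk /= inordK. Qed.

Lemma inp2_inj : injective inp2.
Proof. by move=> a b [] . Qed.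

Lemma oc_nth (x : seq 'I_4) j : oc (nth None (map Some (map inp2 x)) j) = nth None (map Some x) j.
Proof. by elim: x j => [|a x IH] [|j] //=. Qed.

Section Run.
Variables (coins : nat -> nat -> bool) (x : seq 'I_4).
Let px := map Some x.
Let N := size x.
Definition kap i := coins 0 i.
Definition run1 := mkseq (fun i => mk 1 (nth None (None :: px) i) (nth None px i)
                              (nth None px i.+1) (kap i)) N.
Definition P j := code (nth None (None :: None :: px) j).
Definition bLf i := if i is j.+1 then kap j else false.
Definition run2 := mkseq (fun i => mk 2 None None None
   (chkv (P i) (P i.+1) (P i.+2) (P i.+3) (P i.+4) (kap i) (bLf i))) N.

Lemma run1E : paca_run (dl false) (dl true) coins (map inp2 x) 1 = run1.
Proof.
rewrite /= /run1; apply: (@eq_from_nth _ (inp2 (sym 0))).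
  by rewrite size_stepi size_mkseq size_map.
move=> i; rewrite size_stepi size_map => hi.
rewrite nth_stepi ?size_map // nth_mkseq // (nth_map (sym 0)) //.
have -> : (if coins 0 i then dl true else dl false) = dl (kap i) by rewrite /kap; case: (coins 0 i).
rewrite /dl ph_mk //= oc_nth; congr mk; first by case: i hi => //= i _; rewrite oc_nth.
by rewrite /px (nth_map (sym 0)).
Qed.

Lemma run2E : paca_run (dl false) (dl true) coins (map inp2 x) 2 = run2.
Proof.
have -> : paca_run (dl false) (dl true) coins (map inp2 x) 2 =
  stepi (fun i => if coins 1 i then dl true else dl false)
    (paca_run (dl false) (dl true) coins (map inp2 x) 1) by [].
rewrite run1E /run2; apply: (@eq_from_nth _ (inp2 (sym 0))).
  by rewrite size_stepi /run1 !size_mkseq.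
move=> i; rewrite size_stepi /run1 size_mkseq => hi.
rewrite nth_stepi ?size_mkseq // nth_mkseq //.
have -> : (if coins 1 i then dl true else dl false) = dl (coins 1 i) by case: (coins 1 i).
rewrite /dl nth_mkseq // ph_mk //; congr mk.
rewrite /chk /fl /fc /fr /fb /=.
have hR : code (if nth None [seq Some i | i <- mkseq (fun i0 => mk 1 (nth None (None :: px) i0) (nth None px i0)
                              (nth None px i0.+1) (kap i0)) N] i.+1 is Some q then q.1.2 else None) = P i.+4.
  case: (ltnP i.+1 N) => h.
    by rewrite (nth_map (inp2 (sym 0))) ?size_mkseq // nth_mkseq.
  set z := nth _ _ _; have -> : z = None by apply: nth_default; rewrite size_map size_mkseq.
  rewrite /P /= nth_default // /px size_map; lia.
rewrite hR; case: i hi {hR} => [|j] hj //=.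
by rewrite (nth_map (inp2 (sym 0))) ?size_mkseq 1?ltnW // nth_mkseq 1?ltnW.
Qed.
End Run.

Lemma inA2 b : (mk 2 None None None b \in A2) = b.
Proof. by rewrite inE ph_mk. Qed.

Lemma allA_run2 coins x : allA A2 (run2 coins x) =
  all (fun i => chkv (P x i) (P x i.+1) (P x i.+2) (P x i.+3) (P x i.+4) (kap coins i) (bLf coins i))
      (iota 0 (size x)).
Proof. by rewrite /allA /run2 /mkseq all_map; apply: eq_all => i /=; rewrite inA2. Qed.

Lemma ph_dl b L C R : ph (dl b L C R) = minn (ph C).+1 3.
Proof.
have := ltn_ord C.1.1.1.1; rewrite /dl -/(ph C).
case: (ph C) => [|[|[|[|n]]]] h //; rewrite ph_mk //; lia.
Qed.

Lemma run_ph coins s t : all (fun q => ph q == 0) s ->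
  all (fun q => ph q == minn t 3) (paca_run (dl false) (dl true) coins s t).
Proof.
move=> h0; elim: t => [|t IH] //=.
apply/(all_nthP (inp2 (sym 0))) => i; rewrite size_stepi => hi.
rewrite nth_stepi //; move/(all_nthP (inp2 (sym 0))): IH => /(_ i hi) /eqP e.
have -> : forall b : bool, (if b then dl true else dl false) = dl b by case.
rewrite ph_dl e; apply/eqP; lia.
Qed.

Lemma ph_inp (x : seq 'I_4) : all (fun q => ph q == 0) (map inp2 x).
Proof. by rewrite all_map; apply/allP => a _ /=; rewrite ph_mk. Qed.

Lemma size_run coins (s : seq Q2) t : size (paca_run (dl false) (dl true) coins s t) = size s.
Proof. by elim: t => //= t IH; rewrite size_stepi. Qed.

Lemma allA_ph (s : seq Q2) c : 0 < size s -> all (fun q => ph q == c) s -> allA A2 s -> c = 2.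
Proof.
case: s => [|q s] //= _ /andP [/eqP e _] /andP [h _]; move: h; rewrite inE e => /andP [/eqP] //.
Qed.

Lemma acc_t2 coins x t : x != [::] ->
  allA A2 (paca_run (dl false) (dl true) coins (map inp2 x) t) -> t = 2.
Proof.
move=> hx h.
have hs : 0 < size (paca_run (dl false) (dl true) coins (map inp2 x) t).
  by rewrite size_run size_map; case: (x) hx.
have := allA_ph _ _ hs (@run_ph coins (map inp2 x) t (ph_inp x)) h; lia.
Qed.

Definition blk k l m n := nseq k (sym 0) ++ nseq l (sym 1) ++ nseq m (sym 2) ++ nseq n (sym 3).


Lemma size_blk k l m n : size (blk k l m n) = k + l + m + n.
Proof. by rewrite /blk !size_cat !size_nseq !addnA. Qed.

Lemma Pchar k l m n j : let v := P (blk k l m n) j in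
 (v = 4 /\ (j < 2 \/ k+l+m+n+2 <= j)) \/ (v = 0 /\ 2 <= j /\ j < k+2) \/
 (v = 1 /\ k+2 <= j /\ j < k+l+2) \/ (v = 2 /\ k+l+2 <= j /\ j < k+l+m+2) \/
 (v = 3 /\ k+l+m+2 <= j /\ j < k+l+m+n+2).
Proof.
case: j => [|[|j]] /=; [by left; split => //; left| by left; split => //; left|].
rewrite /P /= /blk !map_cat !map_nseq !nth_cat !size_nseq !nth_nseq.
repeat (case: ifP => ?); rewrite /code ?symv //; try lia.
Qed.

Lemma mem_chk k l m n coins : (2 <= l /\ 3 <= m) \/ (3 <= l /\ 2 <= m) ->
  kap coins (k + l - 1) = (3 <= l) -> allA A2 (run2 coins (blk k l m n)).
Proof.
move=> hL hk; rewrite allA_run2; apply/allP => i; rewrite mem_iota size_blk add0n => hi.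
have h0 := Pchar k l m n i; have h1 := Pchar k l m n i.+1; have h2 := Pchar k l m n i.+2.
have h3 := Pchar k l m n i.+3; have h4 := Pchar k l m n i.+4.
move: h0 h1 h2 h3 h4; rewrite /= => h0 h1 h2 h3 h4.
apply/and5P; split; apply/implyP.
- move=> /eqP e; clear -h1 h2 e hi hL; lia.
- move=> /eqP e; clear -h3 h2 e hi hL. lia.
- move=> /eqP e; apply/orP; clear -h2 h3 e hi hL.
  have : P (blk k l m n) i.+3 = P (blk k l m n) i.+2 \/ P (blk k l m n) i.+3 = (P (blk k l m n) i.+2).+1 by lia.
  by case=> ->; [left|right].
- move=> /and3P [/eqP e2 /eqP e3 hb].
  have ei : i = k + l - 1 by clear -h2 h3 e2 e3; lia.
  move: hb; rewrite ei hk => hb; subst i.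
  apply/and3P; split; apply/eqP; clear -h0 h1 h4 hb hL hi; lia.
- move=> /and3P [/eqP e1 /eqP e2 hb].
  have ei : i = k + l by clear -h1 h2 e1 e2; lia.
  have hb' : bLf coins (k + l) = (3 <= l).
    by rewrite -hk /bLf; case E: (k + l) => [|j]; [lia | congr kap; lia].
  move: hb; rewrite ei hb' => hb; subst i.
  apply/and3P; split; apply/eqP; clear -h0 h3 h4 hb hL hi; lia.
Qed.

Lemma sorted_blk (x : seq 'I_4) : sorted (fun a b : 'I_4 => (nat_of_ord a <= nat_of_ord b)%N) x ->
  exists k l m n, x = blk k l m n.
Proof.
elim: x => [|a x IH]; first by exists 0, 0, 0, 0.
move=> hs; have [k [l [m [n E]]]] := IH (path_sorted hs).
have ea : a = sym a by rewrite /sym inord_val.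
have ha := ltn_ord a.
move: hs ea; rewrite E; clear E IH; case: (nat_of_ord a) ha => [|[|[|[|?]]]] // _ hs ea; rewrite {}ea in hs *.
- by exists k.+1, l, m, n.
- case: k hs => [|k] /=; last by case/andP; rewrite !symv.
  by exists 0, l.+1, m, n.
- case: k hs => [|k] /=; last by case/andP; rewrite !symv.
  case: l => [|l] /=; last by case/andP; rewrite !symv.
  by exists 0, 0, m.+1, n.
- case: k hs => [|k] /=; last by case/andP; rewrite !symv.
  case: l => [|l] /=; last by case/andP; rewrite !symv.
  case: m => [|m] /=; last by case/andP; rewrite !symv.
  by exists 0, 0, 0, n.+1.
Qed.

Lemma Pv (x : seq 'I_4) j : P x j.+2 = if j < size x then nat_of_ord (nth (sym 0) x j) else 4.
Proof.
rewrite /P /=; case: ltnP => h; first by rewrite (nth_map (sym 0)).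
by rewrite nth_default ?size_map.
Qed.

Lemma rev_chk coins x : x != [::] -> allA A2 (run2 coins x) -> inL x.
Proof.
move=> hx; rewrite allA_run2 => /allP H.
have HC i : i < size x -> chkv (P x i) (P x i.+1) (P x i.+2) (P x i.+3) (P x i.+4)
    (kap coins i) (bLf coins i).
  by move=> hi; apply: H; rewrite mem_iota add0n.
have hs : sorted (fun a b : 'I_4 => (nat_of_ord a <= nat_of_ord b)%N) x.
  apply/(sortedP (sym 0)) => i hi.
  have /and5P [_ _ c3 _ _] := HC i (ltnW hi).
  move: c3; rewrite !Pv hi ltnW // => /implyP.
  have := ltn_ord (nth (sym 0) x i.+1).
  move=> hlt /(_ _); lia.
have [k [l [m [n E]]]] := sorted_blk _ hs; subst x.
move: hx HC {H hs}; rewrite -size_eq0 size_blk => hN HC.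
pose N := k + l + m + n.
have hkl : 1 <= k + l.
  have /and5P [c1 _ _ _ _] := HC 0 ltac:(lia).
  move/implyP: c1 => /(_ isT) c1.
  have h2 := Pchar k l m n 2; move: h2 => /=; lia.
have hmn : 1 <= m + n.
  have /and5P [_ c2 _ _ _] := HC N.-1 ltac:(lia).
  have h3 := Pchar k l m n N.-1.+3; have h2 := Pchar k l m n N.-1.+2.
  move: h3 h2 => /= h3 h2.
  have e4 : P (blk k l m n) N.-1.+3 = 4 by rewrite /N in h3 *; lia.
  move/implyP: c2; rewrite e4 => /(_ isT) c2; rewrite /N in h2 c2; lia.
have hp : k + l - 1 < k + l + m + n by lia.
have /and5P [_ _ c3 c4 _] := HC _ hp.
have h0 := Pchar k l m n (k + l - 1); have h1 := Pchar k l m n (k + l - 1).+1.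
have h2 := Pchar k l m n (k + l - 1).+2; have h3 := Pchar k l m n (k + l - 1).+3.
have h4 := Pchar k l m n (k + l - 1).+4.
move: h0 h1 h2 h3 h4 => /= h0 h1 h2 h3 h4.
have hlm : P (blk k l m n) (k + l - 1).+2 = 1 /\ P (blk k l m n) (k + l - 1).+3 = 2.
  move/implyP: c3 => c3.
  have ne : P (blk k l m n) (k + l - 1).+3 != 4 by apply/eqP; clear -h3 hkl hmn; lia.
  move: (c3 ne) => /orP [] /eqP; clear -h2 h3 hkl hmn; lia.
case: hlm => e2 e3.
exists k, l, m, n; split => //.
case hb: (kap coins (k + l - 1)).
  move/implyP: c4; rewrite e2 e3 hb => /(_ isT) /and3P [/eqP f0 /eqP f1 /eqP f4].
  right; clear -h0 h4 f0 f4 hkl; lia.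
have hq : k + l < k + l + m + n by clear -h3 e3 hkl hmn; lia.
have /and5P [_ _ _ _ c5] := HC _ hq.
have eb : bLf coins (k + l) = kap coins (k + l - 1).
  by rewrite /bLf; clear -hkl; case E: (k + l) => [|j]; [lia | congr kap; lia].
have ea : k + l - 1 + 1 = k + l by clear -hkl; lia.
have e2' : P (blk k l m n) (k + l).+1 = 1 by rewrite -ea addn1.
have e3' : P (blk k l m n) (k + l).+2 = 2 by rewrite -ea addn1.
move/implyP: c5; rewrite e2' e3' eb hb => /(_ isT) /and3P [/eqP f0 /eqP f3 /eqP f4].
have g0 := Pchar k l m n (k + l); have g4 := Pchar k l m n (k + l).+4.
move: g0 g4 => /= g0 g4.
left; clear -g0 g4 f0 f4 hkl; lia.
Qed.

Lemma coins_ofE T n (c : {ffun 'I_T * 'I_n -> bool}) j i (hj : j < T) (hi : i < n) :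
  coins_of c j i = c (Ordinal hj, Ordinal hi).
Proof.
rewrite /coins_of; case: insubP => [j' _ ej|/negP[]//].
case: insubP => [i' _ ei|/negP[]//].
have -> : i' = Ordinal hj by apply: val_inj.
by have -> : j' = Ordinal hi by apply: val_inj.
Qed.

Lemma card_half (T : finType) (z : T) (b : bool) :
  #|{ffun T -> bool}| <= 2 * #|[set c : {ffun T -> bool} | c z == b]|.
Proof.
set S := [set c : {ffun T -> bool} | c z == b].
pose fl (c : {ffun T -> bool}) := [ffun y => if y == z then ~~ c y else c y].
have fK : involutive fl.
  by move=> c; apply/ffunP => y; rewrite !ffunE; case: eqP => // _; rewrite negbK.
have le : #|~: S| <= #|S|.
  rewrite -(card_imset _ (inv_inj fK)); apply: subset_leq_card.
  apply/subsetP => c' /imsetP [c]; rewrite !inE => hc ->.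
  by rewrite ffunE eqxx; move: hc; case: (c z); case: (b).
rewrite -(cardsC S); lia.
Qed.

Section P2.
Import Order.TTheory GRing.Theory Num.Theory.
Local Open Scope ring_scope.

Lemma part2 : exists (Q : finType) (inp : 'I_4 -> Q) (d0 d1 : option Q -> Q -> option Q -> Q)
       (A : {set Q}),
       injective inp /\ paca_one_sided inp d0 d1 A (7%:R / 8%:R)%R inL /\
       paca_time inp d0 d1 A (fun _ => 3%N).
Proof.
exists (Q2 : finType), inp2, (dl false), (dl true), A2.
split; first exact: inp2_inj.
split; last first.
  move=> x coins t h; case: (x =P [::]) => [->|hx]; first by exists 0%N.
  have et := acc_t2 coins x t (introN eqP hx) h.
  by exists t; split => //; rewrite et.
move=> x hx; split.
- case=> k [l [m [n [E hL]]]] e he; exists 3%N.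
  have {}E : x = blk k l m n := E.
  subst x.
  have hp : (k + l - 1 < size (blk k l m n))%N by rewrite size_blk; lia.
  rewrite /prob_within.
  set N := size (blk k l m n).
  set S := [set c | _].
  pose z0 : 'I_3 * 'I_N := (Ordinal (isT : (0 < 3)%N), Ordinal hp).
  have sub : [set c : {ffun 'I_3 * 'I_N -> bool} | c z0 == (3 <= l)%N] \subset S.
    apply/subsetP => c; rewrite !inE => /eqP hc.
    apply/existsP; exists (Ordinal (isT : (2 < 3)%N)).
    rewrite (_ : nat_of_ord (Ordinal (isT : (2 < 3)%N)) = 2%N) //.
    have := @mem_chk k l m n (coins_of c) hL.
    rewrite /kap (coins_ofE _ _ c _ _ (isT : (0 < 3)%N) hp) -/z0 hc -run2E => H; exact: H.
  have h2 := card_half _ z0 (3 <= l)%N.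
  rewrite card_ffun card_bool card_prod !card_ord in h2.
  have hS := subset_leq_card sub.
  have hD : (0 < 2 ^ (3 * N))%N by rewrite expn_gt0.
  have h3 : (2 ^ (3 * N) <= 2 * #|S|)%N.
    by apply: (leq_trans h2); rewrite leq_mul2l hS orbT.
  move: (2 ^ (3 * N))%N hD h3 => D hD h3.
  move: #|S| h3 => s h3.
  have hD' : (0 : rat) < D%:R by rewrite ltr0n.
  rewrite (ler_pdivlMr _ _ hD').
  have h : (D%:R <= 2 * s%:R :> rat).
    by rewrite -natrM ler_nat.
  have : 0 <= e * D%:R :> rat by apply: mulr_ge0; apply: ltW.
  move: (D%:R) (s%:R) hD' h => d r hd hr he2.
  clear -he hd hr he2; lra.
- move=> nL T; rewrite /prob_within.
  have -> : [set c : {ffun 'I_T * 'I_(size x) -> bool} | [exists t : 'I_T,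
      allA A2 (paca_run (dl false) (dl true) (coins_of c) (map inp2 x) t)]] = set0.
    apply/setP => c; rewrite !inE; apply/negbTE/negP => /existsP [t ht].
    have et := acc_t2 _ _ _ hx ht.
    by move: ht; rewrite et run2E => /(rev_chk _ _ hx).
  by rewrite cards0 mul0r.
Qed.

End P2.

Theorem mainTheorem13 :
  (~ exists (Q : finType) (inp : 'I_4 -> Q) (delta : option Q -> Q -> option Q -> Q)
       (A : {set Q}),
       injective inp /\ daca_recognizes inp delta A inL /\
       daca_time inp delta A (fun _ => 3))
  /\
  (exists (Q : finType) (inp : 'I_4 -> Q) (d0 d1 : option Q -> Q -> option Q -> Q)
       (A : {set Q}),
       injective inp /\ paca_one_sided inp d0 d1 A (7%:R / 8%:R)%R inL /\
       paca_time inp d0 d1 A (fun _ => 3)).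
Proof. split; [exact: part1 | exact: part2]. Qed.
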